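(* Let $\Gamma$ be a finite simple graph, let $g\in G(\Gamma)$ be non-split and cyclically reduced, and let $v_0\in\mathrm{supp}(g)$. Then there exist a $v_0$-conical element $p\in G(\Gamma)$ and elements $a,b\in G(\Gamma)$ such that $$g=apa^{-1}=b^{-1}pb,$$ where $g^k=ab$ holds and is a geodesic decomposition for some $0\le k\le |V(\Gamma)|-1$. In particular, if $n\ge|V(\Gamma)|$, then $g^n=ap^{n-k}b$ is a geodesic decomposition (i.e. $|g^n|=|a|+(n-k)|p|+|b|$).
   Context: $G(\Gamma)=\langle v\in V(\Gamma)\mid [v_i,v_j]=1 \text{ if } \{v_i,v_j\}\notin E(\Gamma)\rangle$. $|g|$ is word length with respect to $V(\Gamma)$; a reduced word is a shortest representative. $\mathrm{supp}(g)$ is the set of generators $v$ such that $v^{\pm1}$ appears in a reduced word for $g$. $g$ is non-split if $\mathrm{supp}(g)$ spans a connected subgraph of $\Gamma$. $g$ is cyclically reduced if it has minimal word length in its conjugacy class. A decomposition $g=g_1\cdots g_k$ is geodesic if $|g|=\sum|g_i|$. The set of starting generators $S(g)$ is the set of $v\in V(\Gamma)$ such that $g=v^{\epsilon}h$ is geodesic for some $\epsilon=\pm1$ and $h\in G(\Gamma)$. $g$ is $v_0$-conical if $S(g)=\{v_0\}$. *)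

(* Defs.v *)
From mathcomp Require Import all_boot.
From mathcomp Require Import boolp.
From Stdlib Require Import Relations.

Set Implicit Arguments.
Unset Strict Implicit.
Unset Printing Implicit Defensive.

(* Vertex set: a finType T; simple graph: symmetric irreflexive e : rel T.
   G(Gamma) = < V | [u,v] = 1 whenever {u,v} is NOT an edge >.
   Elements of G(Gamma) are represented by words over letters (v, s) where
   s = true means v and s = false means v^-1; two words represent the same
   group element iff they are related by [weq e]. *)

Section RAAG.
Variables (T : finType) (e : rel T).

Definition letter := (T * bool)%type.
Definition word := seq letter.

Definition linv (x : letter) : letter := (x.1, ~~ x.2).

Definition winv (w : word) : word := rev (map linv w).
Definition wpow (w : word) (n : nat) : word := flatten (nseq n w).

Inductive wstep : word -> word -> Prop :=
| wstep_cancel (w1 w2 : word) (x : letter) :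
    wstep (w1 ++ [:: x; linv x] ++ w2) (w1 ++ w2)
| wstep_comm (w1 w2 : word) (x y : letter) :
    ~~ e x.1 y.1 -> wstep (w1 ++ [:: x; y] ++ w2) (w1 ++ [:: y; x] ++ w2).

Definition weq : word -> word -> Prop := clos_refl_sym_trans word wstep.

Lemma wlen_ex (w : word) :
  exists n, `[< exists w', weq w w' /\ size w' = n >].
Proof. exists (size w); apply/asboolP; exists w; split => //; exact: rst_refl. Qed.

Definition wlen (w : word) : nat := ex_minn (wlen_ex w).

Definition supp (g : word) (v : T) : Prop :=
  exists w', weq g w' /\ size w' = wlen g /\ v \in map fst w'.

Definition nonsplit (g : word) : Prop :=
  forall u v, supp g u -> supp g v ->
    clos_refl_trans T (fun x y => e x y /\ supp g x /\ supp g y) u v.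

Definition cyc_reduced (g : word) : Prop :=
  forall h : word, wlen g <= wlen (h ++ g ++ winv h).

Definition geod2 (g a b : word) : Prop :=
  weq g (a ++ b) /\ wlen g = wlen a + wlen b.

Definition start_gen (g : word) (v : T) : Prop :=
  exists (eps : bool) (h : word), geod2 g [:: (v, eps)] h.

Definition conical (v0 : T) (p : word) : Prop :=
  forall v, start_gen p v <-> v = v0.

End RAAG.

(* Main.v *)
Require Import Defs.
From mathcomp Require Import all_boot.
From mathcomp Require Import boolp.
From Stdlib Require Import Relation_Operators.

Set Implicit Arguments.
Unset Strict Implicit.
Unset Printing Implicit Defensive.

Section WordProblem.
Variables (T : finType) (e : rel T).
Hypothesis e_sym : symmetric e.

Local Notation letter := (letter T).
Local Notation word := (word T).
Local Notation weq := (weq e).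
Local Notation wstep := (wstep e).

Lemma linvK (x : letter) : linv (linv x) = x.
Proof. by case: x => v b; rewrite /linv /= negbK. Qed.

Lemma weq_refl s : weq s s. Proof. exact: rst_refl. Qed.
Lemma weq_sym s t : weq s t -> weq t s. Proof. exact: rst_sym. Qed.
Lemma weq_trans s t u : weq s t -> weq t u -> weq s u. Proof. exact: rst_trans. Qed.
Lemma weq_step s t : wstep s t -> weq s t. Proof. exact: rst_step. Qed.

Lemma wstep_catl p s t : wstep s t -> wstep (p ++ s) (p ++ t).
Proof.
case=> [w1 w2 x|w1 w2 x y H].
  by rewrite !catA -(catA _ _ w2); exact: wstep_cancel.
by rewrite !catA -!(catA _ _ w2); exact: wstep_comm.
Qed.

Lemma wstep_catr q s t : wstep s t -> wstep (s ++ q) (t ++ q).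
Proof.
case=> [w1 w2 x|w1 w2 x y H].
  by rewrite -!catA; exact: wstep_cancel.
by rewrite -!catA; exact: wstep_comm.
Qed.

Lemma weq_catl p s t : weq s t -> weq (p ++ s) (p ++ t).
Proof.
elim=> [u v H|u|u v _ IH|u v w _ IH1 _ IH2].
- by apply: weq_step; apply: wstep_catl.
- exact: weq_refl.
- exact: weq_sym.
- exact: weq_trans IH2.
Qed.

Lemma weq_catr q s t : weq s t -> weq (s ++ q) (t ++ q).
Proof.
elim=> [u v H|u|u v _ IH|u v w _ IH1 _ IH2].
- by apply: weq_step; apply: wstep_catr.
- exact: weq_refl.
- exact: weq_sym.
- exact: weq_trans IH2.
Qed.

Lemma weq_cat s s' t t' : weq s s' -> weq t t' -> weq (s ++ t) (s' ++ t').
Proof. move=> H1 H2; apply: weq_trans (weq_catr _ H1) (weq_catl _ H2). Qed.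

Lemma weq_cancel x : weq [:: x; linv x] [::].
Proof. by apply: weq_step; have := wstep_cancel e [::] [::] x. Qed.

Lemma winv_cat (s t : word) : winv (s ++ t) = winv t ++ winv s.
Proof. by rewrite /winv map_cat rev_cat. Qed.

Lemma winvK (s : word) : winv (winv s) = s.
Proof. by rewrite /winv map_rev revK -map_comp map_id_in // => x _ /=; rewrite linvK. Qed.

Lemma weq_invr (s : word) : weq (s ++ winv s) [::].
Proof.
elim: s => [|x s IH] /=; first exact: weq_refl.
have -> : winv (x :: s) = winv s ++ [:: linv x].
  by rewrite /winv /= rev_cons cats1.
apply: weq_trans (weq_cancel x).
rewrite catA -cat1s.
have -> : [:: x; linv x] = [:: x] ++ ([::] ++ [:: linv x]) by [].
apply: weq_catl; exact: weq_catr.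
Qed.

Lemma weq_invl (s : word) : weq (winv s ++ s) [::].
Proof. by have := weq_invr (winv s); rewrite winvK. Qed.

Definition dep (u v : T) := (u == v) || e u v.
Lemma dep_sym u v : dep u v = dep v u.
Proof. by rewrite /dep eq_sym e_sym. Qed.
Lemma dep_refl u : dep u u. Proof. by rewrite /dep eqxx. Qed.

Definition pr (u v : T) (s : word) := [seq z <- s | (z.1 == u) || (z.1 == v)].
Definition ceq (s t : word) := forall u v, dep u v -> pr u v s = pr u v t.

Lemma ceq_refl s : ceq s s. Proof. by []. Qed.
Lemma ceq_sym s t : ceq s t -> ceq t s. Proof. by move=> H u v d; rewrite H. Qed.
Lemma ceq_trans s t r : ceq s t -> ceq t r -> ceq s r.
Proof. by move=> H1 H2 u v d; rewrite H1 ?H2. Qed.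

Definition cond (x : letter) (s : word) :=
  ohead [seq z <- s | dep z.1 x.1] == Some (linv x).

Definition push (x : letter) (s : word) :=
  if cond x s then rem (linv x) s else x :: s.

Definition red (s : word) := foldr push [::] s.

Fixpoint reduced (s : word) := if s is x :: s' then ~~ cond x s' && reduced s' else true.

Lemma cond_char x s :
  cond x s <-> (forall v, dep x.1 v -> ohead (pr x.1 v s) = Some (linv x)).
Proof.
elim: s => [|z s IH].
  rewrite /cond /=; split=> // H; by have := H x.1 (dep_refl _).
rewrite /cond /=; case: ifP => dz.
  split.
    move/eqP=> [] zx v dv; rewrite /pr /= zx /= eqxx /=; done.
  move=> H; have := H z.1; rewrite dep_sym dz => /(_ isT).
  by rewrite /pr /= eqxx orbT /= => -[->].
rewrite -/(cond x s) IH; split=> H v dv; have := H v dv; rewrite /pr /=.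
  have -> : (z.1 == x.1) || (z.1 == v) = false.
    apply/negbTE; apply/negP => /orP[/eqP E|/eqP E].
      by move: dz; rewrite E dep_refl.
    by move: dz; rewrite E dep_sym dv.
  by [].
have -> : (z.1 == x.1) || (z.1 == v) = false.
  apply/negbTE; apply/negP => /orP[/eqP E|/eqP E].
    by move: dz; rewrite E dep_refl.
  by move: dz; rewrite E dep_sym dv.
by [].
Qed.

Lemma cond_pr x s t :
  (forall v, dep x.1 v -> pr x.1 v s = pr x.1 v t) -> cond x s = cond x t.
Proof.
move=> H; apply/idP/idP => /cond_char C; apply/cond_char => v dv.
  by rewrite -H // C.
by rewrite H // C.
Qed.

Lemma cond_ceq x s t : ceq s t -> cond x s = cond x t.
Proof. by move=> H; apply: cond_pr => v dv; apply: H. Qed.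

Lemma cond_split x s : cond x s ->
  exists s1 s2, s = s1 ++ linv x :: s2 /\ all (fun z => ~~ dep z.1 x.1) s1.
Proof.
elim: s => [|z s IH] //; rewrite /cond /=; case: ifP => dz.
  by move/eqP=> [] ->; exists [::], s.
move=> /IH [s1 [s2 [-> H]]]; exists (z :: s1), s2; by rewrite /= dz.
Qed.

Lemma filter_rem (p : pred letter) y s :
  filter p (rem y s) = if p y then rem y (filter p s) else filter p s.
Proof.
elim: s => [|z s IH] /=; first by case: ifP.
case: (eqVneq z y) => [->|ne] /=.
  by case: (p y) => /=; rewrite ?eqxx.
rewrite IH; case: (p z); case: (p y) => /=; rewrite ?(negbTE ne) //.
Qed.

Lemma pr_push u v x s :
  pr u v (push x s) =
  if (x.1 == u) || (x.1 == v) then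
    (if cond x s then rem (linv x) (pr u v s) else x :: pr u v s)
  else pr u v s.
Proof.
rewrite /push /pr; case: ifP => c; case: ifP => px /=;
  by rewrite ?filter_rem /= ?px.
Qed.

Lemma push_ceq x s t : ceq s t -> ceq (push x s) (push x t).
Proof.
move=> H u v duv; rewrite !pr_push H //; case: ifP => // /orP P.
rewrite (cond_ceq x H) //.
Qed.

Lemma foldr_push_ceq s t w : ceq s t -> ceq (foldr push s w) (foldr push t w).
Proof. by elim: w => //= x w IH H; apply: push_ceq; apply: IH. Qed.

Lemma rem_cat_notin (y : letter) s1 s2 : y \notin s1 -> rem y (s1 ++ s2) = s1 ++ rem y s2.
Proof.
elim: s1 => //= z s1 IH; rewrite in_cons negb_or => /andP[ne nin].
by rewrite eq_sym (negbTE ne) IH.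
Qed.

Lemma cond_cat_indep x s1 s2 :
  all (fun z => ~~ dep z.1 x.1) s1 -> cond x (s1 ++ s2) = cond x s2.
Proof.
move=> H; rewrite /cond filter_cat.
suff -> : [seq z <- s1 | dep z.1 x.1] = [::] by [].
elim: s1 H => //= z s1 IH /andP[/negbTE -> /IH]; done.
Qed.

Lemma notin_indep x s1 :
  all (fun z => ~~ dep z.1 x.1) s1 -> linv x \notin s1.
Proof.
move=> H; apply/negP => Hin; have := allP H _ Hin; by rewrite /= dep_refl.
Qed.

Lemma reduced_catr s t : reduced (s ++ t) -> reduced t.
Proof. by elim: s => //= x s IH /andP[_ /IH]. Qed.

Lemma cond_cat_has x s t :
  has (fun z => dep z.1 x.1) s -> cond x (s ++ t) = cond x s.
Proof.
rewrite /cond filter_cat has_filter; case: [seq z <- s | _] => //.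
Qed.

Lemma reduced_catl s t : reduced (s ++ t) -> reduced s.
Proof.
elim: s => //= x s IH /andP[c /IH ->]; rewrite andbT.
apply: contra c => c.
have : has (fun z => dep z.1 x.1) s.
  move: c; rewrite /cond has_filter; by case: [seq z <- s | _].
by move/(cond_cat_has t) ->.
Qed.

Lemma reduced_rem x s : reduced s -> cond x s -> reduced (rem (linv x) s).
Proof.
move=> R /cond_split [s1 [s2 [E H]]]; subst s.
rewrite rem_cat_notin ?notin_indep //= eqxx.
elim: s1 H R => [|z s1 IH] /=; first by move=> _ /andP[].
move=> /andP[dz H] /andP[c R]; rewrite IH // andbT.
suff <- : cond z (s1 ++ linv x :: s2) = cond z (s1 ++ s2) by [].
rewrite /cond !filter_cat /=.
by rewrite dep_sym (negbTE dz).
Qed.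

Lemma push_reduced x s : reduced s -> reduced (push x s).
Proof.
rewrite /push; case: ifP => c R; first exact: reduced_rem.
by rewrite /= c.
Qed.

Lemma red_reduced s : reduced (red s).
Proof. by elim: s => //= x s IH; apply: push_reduced. Qed.

Lemma red_id s : reduced s -> red s = s.
Proof.
elim: s => //= x s IH /andP[c /IH ->]; by rewrite /push (negbTE c).
Qed.

Lemma size_push x s :
  size (push x s) = if cond x s then (size s).-1 else (size s).+1.
Proof.
rewrite /push; case: ifP => // c; apply: size_rem.
by have [s1 [s2 [-> _]]] := cond_split c; rewrite mem_cat in_cons eqxx orbT.
Qed.

Lemma size_red_le s : size (red s) <= size s.
Proof.
elim: s => //= x s IH; rewrite size_push; case: ifP => _ //.
by apply: leq_trans (leq_pred _) _; apply: leq_trans IH _.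
Qed.

Lemma size_red_reduced s : size (red s) = size s -> reduced s.
Proof.
elim: s => //= x s IH; rewrite size_push; case: ifP => c.
  move=> E; have := size_red_le s; rewrite -ltnS -E.
  by case: (size (red s)) => [|n] /=; rewrite ?ltnn // ltnNge leqnSn.
move=> [] /IH R; rewrite R andbT; by rewrite (red_id R) in c; rewrite c.
Qed.

Lemma push_cancel x r : reduced r -> ceq (push x (push (linv x) r)) r.
Proof.
move=> R; rewrite {2}/push; case: ifP => c; last first.
  rewrite /push /cond /= dep_refl /= !eqxx; exact: ceq_refl.
rewrite linvK in c *.
have [s1 [s2 [E H]]] := cond_split c.
rewrite linvK in E.
have nc : cond x (rem x r) = false.
  move: R; rewrite E rem_cat_notin; last by rewrite -{1}(linvK x) notin_indep.
  rewrite /= eqxx cond_cat_indep //.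
  move=> R; have := reduced_catr R; by rewrite /= => /andP[/negbTE].
rewrite /push nc.
move=> u v duv; rewrite /pr /=; case: ifP => px; last by rewrite filter_rem px.
rewrite filter_rem px.
have : ohead (pr x.1 (if x.1 == u then v else u) r) = Some (linv (linv x)).
  move/cond_char: c => /(_ (if x.1 == u then v else u)); rewrite linvK /=.
  apply; case: eqP px => [->|ne] /=; first by [].
  by move/eqP ->; rewrite dep_sym.
rewrite linvK.
have -> : pr x.1 (if x.1 == u then v else u) r = [seq x0 <- r | (x0.1 == u) || (x0.1 == v)].
  rewrite /pr; apply: eq_filter => z; case: eqP px => [->|ne] /= /eqP E2.
    by [].
  by rewrite -E2 orbC.
case: [seq _ <- r | _] => //= y t [] ->; by rewrite eqxx.
Qed.

Lemma same_vertex (x y : letter) : x.1 = y.1 -> x != y -> y = linv x.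
Proof.
case: x => a b; case: y => c d /= -> ne; rewrite /linv /=; congr pair.
by move: ne; case: b; case: d => //=; rewrite eqxx.
Qed.

Lemma push_comm x y r : reduced r -> ~~ e x.1 y.1 ->
  ceq (push x (push y r)) (push y (push x r)).
Proof.
move=> R nxy.
case: (eqVneq x y) => [Exy|nexy]; first by rewrite Exy; exact: ceq_refl.
case: (eqVneq x.1 y.1) => [E1|ne1].
  have yx := same_vertex E1 nexy.
  rewrite yx; apply: ceq_trans (push_cancel x R) _.
  apply: ceq_sym; have := push_cancel (linv x) R; by rewrite linvK.
have cxy : forall a b s, a.1 != b.1 -> ~~ e a.1 b.1 -> cond a (push b s) = cond a s.
  move=> a b s n1 n2; apply: cond_pr => v dv; rewrite pr_push.
  case: ifP => // /orP[/eqP E|/eqP E]; first by rewrite E eqxx in n1.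
  by move: dv; rewrite -E /dep (negbTE n1) (negbTE n2).
have nyx : ~~ e y.1 x.1 by rewrite e_sym.
have ne1' : y.1 != x.1 by rewrite eq_sym.
move=> u v duv; rewrite !pr_push cxy // cxy //.
case px: ((x.1 == u) || (x.1 == v)); case py: ((y.1 == u) || (y.1 == v)) => //.
exfalso; move/orP: px => [/eqP Ex|/eqP Ex]; move/orP: py => [/eqP Ey|/eqP Ey].
- by move: ne1; rewrite Ex Ey eqxx.
- by move: duv; rewrite -Ex -Ey /dep (negbTE ne1) /= (negbTE nxy).
- by move: duv; rewrite -Ex -Ey /dep (negbTE ne1') /= (negbTE nyx).
- by move: ne1; rewrite Ex Ey eqxx.
Qed.

Lemma red_cat s t : red (s ++ t) = foldr push (red t) s.
Proof. by rewrite /red foldr_cat. Qed.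

Lemma red_step s t : wstep s t -> ceq (red s) (red t).
Proof.
case=> [w1 w2 x|w1 w2 x y H]; rewrite !red_cat; apply: foldr_push_ceq.
  by rewrite /= ; apply: push_cancel; exact: red_reduced.
by apply: push_comm => //; exact: red_reduced.
Qed.

Lemma red_weq s t : weq s t -> ceq (red s) (red t).
Proof.
elim=> [u v H|u|u v _ IH|u v w _ IH1 _ IH2].
- exact: red_step.
- exact: ceq_refl.
- exact: ceq_sym.
- exact: ceq_trans IH2.
Qed.

Lemma indep_commute x s t : all (fun z => ~~ dep z.1 x.1) s ->
  weq (x :: s ++ t) (s ++ x :: t).
Proof.
elim: s => [|z s IH] /=; first by move=> _; exact: weq_refl.
move=> /andP[dz H].
have Hxz : ~~ e x.1 z.1.
  by apply: contra dz; rewrite /dep e_sym => ->; rewrite orbT.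
have W : wstep (x :: z :: s ++ t) (z :: x :: s ++ t) :=
  @wstep_comm _ e [::] (s ++ t) x z Hxz.
apply: weq_trans (weq_step W) _.
have := weq_catl [:: z] (IH H); by [].
Qed.

Lemma weq_push x s : weq (x :: s) (push x s).
Proof.
rewrite /push; case: ifP => c; last exact: weq_refl.
have [s1 [s2 [E H]]] := cond_split c; subst s.
rewrite rem_cat_notin ?notin_indep //= eqxx.
have H' : all (fun z => ~~ dep z.1 x.1) s1 by [].
apply: weq_trans (@indep_commute x s1 (linv x :: s2) H') _.
apply: (weq_catl s1); exact: (weq_catr s2 (weq_cancel x)).
Qed.

Lemma weq_red s : weq s (red s).
Proof.
elim: s => /= [|x s IH]; first exact: weq_refl.
exact: weq_trans (weq_catl [:: x] IH) (weq_push x (red s)).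
Qed.

Lemma size_ceq s t : ceq s t -> size s = size t.
Proof.
move=> H; apply: perm_size; apply/allP => z _; apply/eqP.
have P u : pr u u s = pr u u t by apply: H; exact: dep_refl.
have E r : count_mem z r = count_mem z (pr z.1 z.1 r).
  rewrite /pr count_filter; apply: eq_count => y /=.
  by case: eqP => // ->; rewrite eqxx.
by rewrite E P -E.
Qed.

Lemma mem_ceq s t v : ceq s t -> (v \in map fst s) = (v \in map fst t).
Proof.
move=> H; have P := H v v (dep_refl v).
have E r : (v \in map fst r) = (pr v v r != [::]).
  rewrite /pr -has_filter; apply/mapP/hasP => [[z zr ->]|[z zr]].
    by exists z; rewrite ?eqxx.
  by rewrite orbb => /eqP <-; exists z.
by rewrite !E P.
Qed.

Lemma wlen_red s : wlen e s = size (red s).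
Proof.
rewrite /wlen; case: ex_minnP => m /asboolP [w' [H1 H2]] Hmin.
apply/eqP; rewrite eqn_leq; apply/andP; split.
  apply: Hmin; apply/asboolP; exists (red s); split => //; exact: weq_red.
rewrite -H2 (size_ceq (red_weq H1)); exact: size_red_le.
Qed.

Lemma wlen_weq s t : weq s t -> wlen e s = wlen e t.
Proof. by move=> H; rewrite !wlen_red (size_ceq (red_weq H)). Qed.

Lemma wlen_reduced s : reduced s -> wlen e s = size s.
Proof. by move=> R; rewrite wlen_red red_id. Qed.

Lemma reduced_weq s t : reduced s -> weq s t -> size s = size t -> reduced t.
Proof.
move=> R H E; apply: size_red_reduced.
by rewrite -wlen_red -(wlen_weq H) wlen_reduced.
Qed.

Lemma notreduced_wlen s : ~~ reduced s -> wlen e s < size s.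
Proof.
move=> nR; rewrite wlen_red ltn_neqAle size_red_le andbT.
by apply: contra nR => /eqP /size_red_reduced.
Qed.

Lemma reduced_ceq_weq s t : reduced s -> reduced t -> weq s t -> ceq s t.
Proof. by move=> Rs Rt H; rewrite -(red_id Rs) -(red_id Rt); exact: red_weq. Qed.

End WordProblem.


Section Split.
Variables (T : finType) (e : rel T).
Hypothesis e_sym : symmetric e.
Variable v0 : T.

Local Notation letter := (letter T).
Local Notation word := (word T).
Local Notation dep := (dep e).
Local Notation cond := (cond e).
Local Notation reduced := (reduced e).

Definition join (vs : seq T) (z : letter) := (z.1 == v0) || has (dep z.1) vs.

Fixpoint go (vs : seq T) (s : word) : word * word :=
  match s with
  | [::] => ([::], [::])
  | z :: s' => if join vs z then ((go (z.1 :: vs) s').1, z :: (go (z.1 :: vs) s').2)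
               else (z :: (go vs s').1, (go vs s').2)
  end.

Fixpoint gost (vs : seq T) (s : word) : seq T :=
  match s with
  | [::] => vs
  | z :: s' => if join vs z then gost (z.1 :: vs) s' else gost vs s'
  end.

Lemma go_cat vs s t : go vs (s ++ t) =
  ((go vs s).1 ++ (go (gost vs s) t).1, (go vs s).2 ++ (go (gost vs s) t).2).
Proof.
elim: s vs => [|z s IH] vs /=; first by case: (go vs t).
by case: ifP => _; rewrite IH.
Qed.

Lemma gost_cat vs s t : gost vs (s ++ t) = gost (gost vs s) t.
Proof. by elim: s vs => //= z s IH vs; case: ifP. Qed.

Lemma gost_mono vs s v : v \in vs -> v \in gost vs s.
Proof.
elim: s vs => //= z s IH vs H; case: ifP => _; apply: IH => //.
by rewrite in_cons H orbT.
Qed.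

Lemma has_sub (p : pred T) (vs vs' : seq T) :
  {subset vs <= vs'} -> has p vs -> has p vs'.
Proof. by move=> S /hasP [x xin px]; apply/hasP; exists x => //; apply: S. Qed.

Lemma join_mono vs vs' y : {subset vs <= vs'} -> join vs y -> join vs' y.
Proof. by rewrite /join => S /orP[->//|H]; rewrite (has_sub S H) orbT. Qed.

Lemma sub_cons (u : T) vs : {subset vs <= u :: vs}.
Proof. by move=> x xin; rewrite in_cons xin orbT. Qed.

Lemma gost_join vs s y : y \in s -> join vs y -> y.1 \in gost vs s.
Proof.
elim: s vs => //= z s IH vs; rewrite in_cons => /orP[/eqP ->|ys] J.
  by rewrite J; apply: gost_mono; rewrite in_cons eqxx.
case: ifP => _; apply: IH => //; exact: join_mono (@sub_cons _ _) J.
Qed.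

Lemma goA_inv vs s y : y \in (go vs s).1 -> ~~ has (dep y.1) vs.
Proof.
elim: s vs => //= z s IH vs; case: ifP => J /=.
  move=> /IH /=; by rewrite negb_or => /andP[].
rewrite in_cons => /orP[/eqP ->|/IH //].
by move/negbT: J; rewrite /join negb_or => /andP[].
Qed.

Lemma goA_nil vs s : (forall y, y \in s -> join vs y) -> (go vs s).1 = [::].
Proof.
elim: s vs => //= z s IH vs H; rewrite H ?in_cons ?eqxx //=.
apply: IH => y ys; apply: join_mono (@sub_cons _ _) _; apply: H.
by rewrite in_cons ys orbT.
Qed.

Lemma go_ext vs1 vs2 t :
  (forall y, y \in t -> has (dep y.1) vs1 = has (dep y.1) vs2) -> go vs1 t = go vs2 t.
Proof.
elim: t vs1 vs2 => //= z t IH vs1 vs2 H.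
have -> : join vs1 z = join vs2 z by rewrite /join H ?in_cons ?eqxx.
rewrite (IH (z.1 :: vs1) (z.1 :: vs2)) ?(IH vs1 vs2) //.
  by move=> y yt; apply: H; rewrite in_cons yt orbT.
move=> y yt /=; rewrite H // in_cons yt orbT //.
Qed.

Lemma goA_sub vs vs' s : {subset vs <= vs'} ->
  (go vs' s).1 = (go vs' (go vs s).1).1.
Proof.
elim: s vs vs' => //= z s IH vs vs' S.
case J: (join vs z).
  rewrite (join_mono S J) /=.
  have S' : {subset z.1 :: vs <= z.1 :: vs'}.
    move=> x; rewrite !in_cons => /orP[->//|/S ->]; by rewrite orbT.
  rewrite (IH _ _ S'); congr fst; apply: go_ext => y /goA_inv /=.
  by rewrite negb_or => /andP[/negbTE ->].
case J': (join vs' z) => /=; rewrite J' /=.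
  apply: IH => x /S; exact: (@sub_cons _ _).
by rewrite (IH _ _ S).
Qed.

Lemma go_weq vs s : weq e s ((go vs s).1 ++ (go vs s).2).
Proof.
elim: s vs => [|z s IH] vs /=; first exact: weq_refl.
case: ifP => J /=.
  apply: weq_trans (weq_catl [:: z] (IH (z.1 :: vs))) _.
  apply: indep_commute => //; apply/allP => y /goA_inv /=.
  by rewrite negb_or => /andP[].
by have := weq_catl [:: z] (IH vs).
Qed.

Lemma go_size vs s : size (go vs s).1 + size (go vs s).2 = size s.
Proof. by elim: s vs => //= z s IH vs; case: ifP => _ /=; rewrite ?addnS ?addSn IH. Qed.

Lemma goU_struct vs s U1 z U2 : (go vs s).2 = U1 ++ z :: U2 ->
  [|| z.1 == v0, has (dep z.1) vs | has (fun y => dep z.1 y.1) U1].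
Proof.
elim: s vs U1 => [|z' s IH] vs U1 /=; first by case: U1.
case: ifP => J /=; last exact: IH.
case: U1 => [|y U1] /= [<-]; first by move: J; rewrite /join => /orP[->|->]; rewrite ?orbT.
move=> /IH /= /or3P[->//|/orP[->|->]|->]; by rewrite /= ?orbT.
Qed.

Lemma goU_nonempty vs s : has (fun y => y.1 == v0) s -> (go vs s).2 != [::].
Proof.
elim: s vs => //= z s IH vs; case: ifP => J //= /orP[H|H].
  by move: J; rewrite /join H.
exact: IH.
Qed.

Lemma reduced_cat_intro s t : reduced t ->
  (forall s1 x s', s = s1 ++ x :: s' -> ~~ cond x (s' ++ t)) -> reduced (s ++ t).
Proof.
elim: s => //= x s IH Rt H; rewrite (H [::] x s) //= IH //.
by move=> s1 y s' E; apply: (H (x :: s1)); rewrite E.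
Qed.

Lemma wpow_S (w : word) n : wpow w n.+1 = w ++ wpow w n.
Proof. by []. Qed.

Lemma wpow_add (w : word) m n : wpow w (m + n) = wpow w m ++ wpow w n.
Proof. by elim: m => [|m IH] //; rewrite addSn !wpow_S IH catA. Qed.

Lemma wpow_Sr (w : word) n : wpow w n.+1 = wpow w n ++ w.
Proof. by rewrite -addn1 wpow_add /wpow /= cats0. Qed.

Lemma size_wpow (w : word) n : size (wpow w n) = n * size w.
Proof. by elim: n => //= n IH; rewrite wpow_S size_cat IH mulSn. Qed.

Lemma weq_wpow (g w : word) n : weq e g w -> weq e (wpow g n) (wpow w n).
Proof.
move=> H; elim: n => [|n IH]; first exact: weq_refl.
rewrite !wpow_S; exact: weq_cat.
Qed.

Lemma reduced_pow (w : word) : reduced w -> reduced (w ++ w) -> forall n, reduced (wpow w n).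
Proof.
move=> R RR; elim=> [|n IH] //; rewrite wpow_S.
case: n IH => [|m] IH; first by rewrite /wpow /= cats0.
apply: reduced_cat_intro => // s1 x s' E.
rewrite wpow_S catA cond_cat_has; last first.
  apply/hasP; exists x; last exact: dep_refl.
  by rewrite mem_cat E mem_cat in_cons eqxx !orbT.
move: RR; rewrite {1}E -catA /= => /reduced_catr /=.
by case/andP.
Qed.

Lemma linv_neq (x : letter) : x != linv x.
Proof. by case: x => a [] /=; rewrite /linv /= xpair_eqE eqxx. Qed.

Lemma cyc_double (w : word) : reduced w ->
  (forall h : word, size w <= wlen e (h ++ w ++ winv h)) -> reduced (w ++ w).
Proof.
move=> R Hc; apply: reduced_cat_intro => // s1 x s' E; apply/negP => C.
case: (boolP (has (fun z => dep z.1 x.1) s')) => hs.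
  move: C; rewrite cond_cat_has // => C.
  move: R; rewrite E => /reduced_catr /= /andP[]; by rewrite C.
have As : all (fun z => ~~ dep z.1 x.1) s'.
  by apply/allP => z zin; apply: contra hs => d; apply/hasP; exists z.
move: C; rewrite cond_cat_indep // => C.
have C1 : cond x (s1 ++ s').
  case: (boolP (has (fun z => dep z.1 x.1) s1)) => h1.
    by rewrite cond_cat_has //; move: C; rewrite E cond_cat_has.
  have A1 : all (fun z => ~~ dep z.1 x.1) s1.
    by apply/allP => z zin; apply: contra h1 => d; apply/hasP; exists z.
  move: C; rewrite E cond_cat_indep // /cond /= dep_refl /=.
  by move/eqP => [] /eqP; rewrite -[_ == _]/(x == linv x) (negbTE (linv_neq x)).
have W1 : weq e w (s1 ++ s' ++ [:: x]).
  rewrite E; apply: weq_catl; have := @indep_commute _ _ e_sym x s' [::] As.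
  by rewrite cats0.
have W2 : weq e ([:: x] ++ w ++ winv [:: x]) (x :: s1 ++ s').
  rewrite /winv /=.
  apply: weq_trans (weq_catl [:: x] (weq_catr [:: linv x] W1)) _.
  rewrite -!catA /=.
  have := weq_catl (x :: s1 ++ s') (weq_cancel e x); by rewrite cats0 /= -catA.
have := Hc [:: x]; rewrite (wlen_weq e_sym W2).
have := notreduced_wlen e_sym (s := x :: s1 ++ s'); rewrite /= C1 /= => /(_ isT).
rewrite E !size_cat /= => H1 H2.
by have := leq_ltn_trans H2 H1; rewrite addnS ltnn.
Qed.

End Split.


Section Layers.
Variables (T : finType) (e : rel T).
Hypothesis e_sym : symmetric e.
Variables (v0 : T) (w : word T).

Fixpoint inL (j : nat) (v : T) : bool :=
  if j is j'.+1 then inL j' v || ((v \in map fst w) && [exists u, inL j' u && e u v])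
  else v == v0.

Lemma inL_le i j v : i <= j -> inL i v -> inL j v.
Proof.
elim: j => [|j IH]; first by rewrite leqn0 => /eqP ->.
rewrite leq_eqVlt => /orP[/eqP -> //|H] /(IH H) /= ->; done.
Qed.

Lemma inL_stable j : inL j.+1 =1 inL j -> forall m, inL (j + m) =1 inL j.
Proof.
move=> H; elim=> [|m IH] v; first by rewrite addn0.
rewrite addnS /=.
have -> : [exists u, inL (j + m) u && e u v] = [exists u, inL j u && e u v].
  by apply: eq_existsb => u; rewrite IH.
by rewrite IH; exact: (H v).
Qed.

Lemma card_L j : (forall i, i < j -> ~~ [forall v, inL i.+1 v == inL i v]) ->
  j.+1 <= #|[set v | inL j v]|.
Proof.
elim: j => [|j IH] H.
  by apply/card_gt0P; exists v0; rewrite inE /=.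
have IH' := IH (fun i hi => H i (ltnW hi)).
apply: leq_ltn_trans IH' _; apply: proper_card; apply/properP; split.
  by apply/subsetP => v; rewrite !inE /= => ->.
have := H j (ltnSn j); rewrite negb_forall => /existsP [v].
rewrite /=; case Hj: (inL j v) => //=.
by move=> Hv; exists v; rewrite !inE /= ?Hj //=; move: Hv; case: (_ && _).
Qed.

Lemma inL_full v : inL #|T| v = inL #|T|.-1 v.
Proof.
have n0 : 0 < #|T| by apply/card_gt0P; exists v0.
case: (boolP [exists i : 'I_#|T|, [forall v, inL i.+1 v == inL i v]]).
  move=> /existsP [i /forallP Hi].
  have Hs : inL i.+1 =1 inL i by move=> u; apply/eqP; exact: Hi.
  have Hi1 : i <= #|T| by apply: ltnW.
  have Hi2 : i <= #|T|.-1 by rewrite -ltnS prednK.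
  have E1 := inL_stable Hs (#|T| - i).
  have E2 := inL_stable Hs (#|T|.-1 - i).
  rewrite (subnKC Hi1) in E1; rewrite (subnKC Hi2) in E2.
  by rewrite E1 E2.
rewrite negb_exists => /forallP H.
have := card_L (j := #|T|) (fun i hi => H (Ordinal hi)).
by rewrite ltnNge max_card.
Qed.

Lemma inL_st j v : v0 \in map fst w -> inL j v -> v \in gost e v0 [::] (wpow w j.+1).
Proof.
move=> hv0; elim: j v => [|j IH] v /=.
  move/eqP ->; case/mapP: hv0 => y yw ->.
  apply: gost_join; first by rewrite /wpow /= cats0.
  by rewrite /join eqxx.
rewrite wpow_Sr gost_cat => /orP[/IH H|/andP[vw /existsP[u /andP[hu euv]]]].
  exact: gost_mono.
case/mapP: vw => y yw Ev; rewrite Ev; apply: gost_join => //.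
apply/orP; right; apply/hasP; exists u; first exact: IH.
by rewrite -Ev /dep e_sym euv orbT.
Qed.

Lemma all_join_gen j : v0 \in map fst w -> (forall v, v \in map fst w -> inL j v) ->
  forall y, y \in w -> join e v0 (gost e v0 [::] (wpow w j)) y.
Proof.
move=> hv0 H y yw; have := H y.1 (map_f _ yw).
case: j H => [|j] H /=; first by rewrite /join => ->.
move=> /orP[/(inL_st hv0) H1|/andP[_ /existsP[u /andP[hu euv]]]].
  apply/orP; right; apply/hasP; exists y.1 => //; exact: dep_refl.
apply/orP; right; apply/hasP; exists u; first exact: inL_st.
by rewrite /dep e_sym euv orbT.
Qed.

Lemma all_join : v0 \in map fst w ->
  (forall P : pred T, P v0 -> (forall x y, x \in map fst w -> y \in map fst w -> e x y -> P x -> P y) ->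
     forall u, u \in map fst w -> P u) ->
  forall y, y \in w -> join e v0 (gost e v0 [::] (wpow w #|T|.-1)) y.
Proof.
move=> hv0 conn; apply: all_join_gen => //.
have n0 : 0 < #|T| by apply/card_gt0P; exists v0.
apply: conn; first by apply: (inL_le (i := 0)); rewrite //=.
move=> x y _ yw exy hx; rewrite -inL_full.
by rewrite -(prednK n0) /= yw /=; apply/orP; right; apply/existsP; exists x; rewrite hx.
Qed.

End Layers.


Theorem proposition2p4 (T : finType) (e : rel T)
  (e_sym : symmetric e) (e_irr : irreflexive e)
  (g : word T) (v0 : T) :
  nonsplit e g -> cyc_reduced e g -> supp e g v0 ->
  exists (p a b : word T) (k : nat),
    conical e v0 p /\
    weq e g (a ++ p ++ winv a) /\
    weq e g (winv b ++ p ++ b) /\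
    k <= #|T|.-1 /\
    geod2 e (wpow g k) a b /\
    (forall n : nat, #|T| <= n ->
       weq e (wpow g n) (a ++ wpow p (n - k) ++ b) /\
       wlen e (wpow g n) = wlen e a + (n - k) * wlen e p + wlen e b).
Proof.
move=> NS CR Sv0.
set w := red e g.
have Wg : weq e g w := weq_red e_sym g.
have Rw : reduced e w := red_reduced e_sym g.
have Lg : wlen e g = size w := wlen_red e_sym g.
have suppW : forall v, supp e g v <-> v \in map fst w.
  move=> v; split.
    move=> [w' [H1 [H2 H3]]].
    have C1 : ceq e w (red e w') := red_weq e_sym H1.
    have Hs : size (red e w') = size w'.
      by rewrite -(size_ceq C1) -Lg H2.
    have Rw' := size_red_reduced Hs.
    rewrite (red_id Rw') in C1.
    by rewrite (mem_ceq v C1).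
  by move=> H; exists w; split => //; split.
have hv0 : v0 \in map fst w by apply/suppW.
have CRw : forall h, size w <= wlen e (h ++ w ++ winv h).
  move=> h; rewrite -Lg; apply: leq_trans (CR h) _; apply: eq_leq.
  apply: (wlen_weq e_sym); apply: (weq_catl h); exact: (weq_catr (winv h) Wg).
have RR := cyc_double e_sym Rw CRw.
have Rpow := reduced_pow Rw RR.
have conn : forall P : pred T, P v0 ->
    (forall x y, x \in map fst w -> y \in map fst w -> e x y -> P x -> P y) ->
    forall u, u \in map fst w -> P u.
  move=> P P0 step u uw.
  have gen : forall x y, clos_refl_trans T (fun x y => e x y /\ supp e g x /\ supp e g y) x y ->
      P x -> P y.
    move=> x y; elim => [x1 y1 [exy [sx sy]]|x1|x1 y1 z1 _ IH1 _ IH2] //.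
      by apply: step => //; apply/suppW.
    by move=> /IH1 /IH2.
  exact: (gen _ _ (NS v0 u Sv0 (proj2 (suppW u) uw)) P0).
set k := #|T|.-1.
have AJ := all_join e_sym hv0 conn.
set a := (go e v0 [::] (wpow w k)).1.
set b := (go e v0 [::] (wpow w k)).2.
have Ea : (go e v0 [::] (w ++ a)).1 = a.
  have E1 : (go e v0 [::] (wpow w k.+1)).1 = a.
    by rewrite wpow_Sr go_cat /= (goA_nil AJ) cats0.
  have E2 : (go e v0 [::] (wpow w k.+1)).1 =
      (go e v0 [::] w).1 ++ (go e v0 (gost e v0 [::] w) a).1.
    by rewrite wpow_S go_cat /= (@goA_sub _ e v0 [::] _ (wpow w k)).
  by rewrite go_cat /= -E2 E1.
set q := (go e v0 [::] (w ++ a)).2.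
have Wab : weq e (wpow w k) (a ++ b) := go_weq e_sym v0 [::] (wpow w k).
have Wwa : weq e (w ++ a) (a ++ q).
  by have := go_weq e_sym v0 [::] (w ++ a); rewrite Ea.
have Sab : size a + size b = size (wpow w k) := go_size e v0 [::] (wpow w k).
have Saq : size a + size q = size w + size a.
  by have := go_size e v0 [::] (w ++ a); rewrite Ea size_cat.
have Sq : size q = size w.
  by apply/eqP; rewrite -(eqn_add2l (size a)) Saq addnC.
have Rab : reduced e (a ++ b).
  by apply: (reduced_weq e_sym (Rpow k) Wab); rewrite size_cat.
have Ra : reduced e a := reduced_catl Rab.
have Rb : reduced e b := reduced_catr Rab.
have Rwab : reduced e (w ++ a ++ b).
  apply: (reduced_weq e_sym (Rpow k.+1) (weq_catl w Wab)).
  by rewrite wpow_S !size_cat Sab.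
have Rwa : reduced e (w ++ a) by apply: (@reduced_catl _ e _ b); rewrite -catA.
have Raq : reduced e (a ++ q).
  by apply: (reduced_weq e_sym Rwa Wwa); rewrite !size_cat Saq addnC.
have Rq : reduced e q := reduced_catr Raq.
have WA : weq e g (a ++ q ++ winv a).
  apply: weq_trans Wg _.
  have H1 : weq e w (w ++ a ++ winv a).
    by have := weq_catl w (weq_sym (weq_invr e a)); rewrite cats0.
  apply: weq_trans H1 _; rewrite catA [a ++ q ++ _]catA.
  exact: (weq_catr (winv a) Wwa).
have Wqb : weq e (q ++ b) (b ++ w).
  have H2 : weq e (a ++ q ++ b) (a ++ b ++ w).
    rewrite catA; apply: weq_trans (weq_catr b (weq_sym Wwa)) _.
    rewrite -catA; apply: weq_trans (weq_catl w (weq_sym Wab)) _.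
    rewrite -wpow_S wpow_Sr catA; exact: (weq_catr w Wab).
  have H3 := weq_catl (winv a) H2.
  have H4 : forall X, weq e (winv a ++ a ++ X) X.
    by move=> X; have := weq_catr X (weq_invl e a); rewrite -catA.
  exact: weq_trans (weq_sym (H4 _)) (weq_trans H3 (H4 _)).
have WB : weq e g (winv b ++ q ++ b).
  apply: weq_trans Wg _.
  have H5 : weq e w (winv b ++ b ++ w).
    by have := weq_catr w (weq_sym (weq_invl e b)); rewrite -catA.
  apply: weq_trans H5 _; apply: weq_catl; exact: weq_sym.
have Wpow : forall m, weq e (wpow q m ++ b) (b ++ wpow w m).
  elim=> [|m IH]; first by rewrite /= cats0; exact: weq_refl.
  rewrite !wpow_S -catA; apply: weq_trans (weq_catl q IH) _.
  by have := weq_catr (wpow w m) Wqb; rewrite -!catA.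
have La : wlen e a = size a := wlen_reduced e_sym Ra.
have Lb : wlen e b = size b := wlen_reduced e_sym Rb.
have Lq : wlen e q = size w by rewrite (wlen_reduced e_sym Rq).
have Lpow : forall n, wlen e (wpow g n) = n * size w.
  move=> n; rewrite (wlen_weq e_sym (weq_wpow n Wg)) (wlen_reduced e_sym (Rpow n)).
  exact: size_wpow.
exists q, a, b, k; split; last split; last split; last split; last split.
- move=> v; split.
  + move=> [eps [h [H1 H2]]].
    set y := (v, eps).
    have W1 : weq e q (y :: red e h).
      apply: weq_trans H1 _; exact: (weq_catl [:: y] (weq_red e_sym h)).
    have Ly : wlen e [:: y] = 1 by rewrite (wlen_reduced e_sym (s:=[:: y])).
    have Ry : reduced e (y :: red e h).
      apply: (reduced_weq e_sym Rq W1).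
      by rewrite /= -(wlen_reduced e_sym Rq) H2 Ly (wlen_red e_sym h).
    have Cq : ceq e q (y :: red e h) := reduced_ceq_weq e_sym Rq Ry W1.
    have Cc : cond e (linv y) q.
      by rewrite (cond_ceq e_sym (linv y) Cq) /cond /= dep_refl /= linvK eqxx.
    have [s1 [s2 [Eq As]]] := cond_split Cc.
    rewrite linvK in Eq.
    have := @goU_struct T e v0 [::] (w ++ a) s1 y s2 Eq.
    rewrite /= => /orP[/eqP //|H].
    exfalso; case/hasP: H => z zin d; have := allP As z zin.
    by rewrite /= (dep_sym e_sym) d.
  + move=> ->.
    have Hh : has (fun y => y.1 == v0) (w ++ a).
      rewrite has_cat; case/mapP: hv0 => y yw Ey; apply/orP; left.
      by apply/hasP; exists y => //; rewrite -Ey.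
    have := @goU_nonempty T e v0 [::] (w ++ a) Hh.
    rewrite -/q; case Eq: q => [|z q2] // _.
    have := @goU_struct T e v0 [::] (w ++ a) [::] z q2 Eq.
    rewrite /= !orbF => /eqP Ez.
    have Rq2 : reduced e q2 by apply: (@reduced_catr _ e [:: z]); rewrite cat1s -Eq.
    exists z.2, q2; split.
      by rewrite -Ez -surjective_pairing; exact: weq_refl.
    rewrite -Eq (wlen_reduced e_sym Rq) (wlen_reduced e_sym Rq2) Eq.
    by rewrite (wlen_reduced e_sym (s:=[:: (v0, z.2)])).
- exact: WA.
- exact: WB.
- exact: leqnn.
- split; first exact: weq_trans (weq_wpow k Wg) Wab.
  by rewrite Lpow La Lb Sab size_wpow.
- move=> n Hn.
  have kn : k <= n by apply: leq_trans Hn; exact: leq_pred.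
  split.
    apply: weq_trans (weq_wpow n Wg) _.
    rewrite -(subnKC kn) wpow_add subnKC //.
    apply: weq_trans (weq_catr _ Wab) _; rewrite -catA; apply: weq_catl.
    exact: weq_sym.
  rewrite Lpow La Lb Lq addnAC Sab size_wpow -mulnDl subnKC //.
Qed.
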